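(* Let $L$ be a positive definite even lattice with dual lattice $L^\circ$, and let $\sigma$ be an isometry of $L$ of order $p\ge 2$ which is fixed-point-free on $L$ (extended $\mathbb{Q}$-linearly to $L^\circ$). Let $s=p$ if $p$ is even and $s=2p$ if $p$ is odd, and let $c^\sigma: L\times L\to \mathbb{Z}_s$ be defined by $$c^\sigma(\alpha,\beta)=\frac{s}{p}\sum_{i=1}^{p-1}\langle i\sigma^i(\alpha),\beta\rangle + s\mathbb{Z}.$$ Let $R_L^\sigma=\{\alpha\in L \mid c^\sigma(\alpha,\beta)=0 \text{ for all }\beta\in L\}$. Then $$R_L^\sigma=\big((1-\sigma)L^\circ\big)\cap L.$$
   Context: $L^\circ=\{\alpha\in\mathbb{Q}\otimes_{\mathbb{Z}}L \mid \langle\alpha,L\rangle\subset\mathbb{Z}\}$. ''Fixed-point-free'' means $\sigma$ fixes no nonzero element of $L$. *)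

(* Defs.v *)
(* Lattice L modelled as Z^n inside Q^n (column vectors),
   with rational Gram matrix G; isometry sigma given by a matrix S. *)
From HB Require Import structures.
From mathcomp Require Import all_boot all_order all_algebra.
Set Implicit Arguments. Unset Strict Implicit. Unset Printing Implicit Defensive.
Import Order.TTheory GRing.Theory Num.Theory.
Local Open Scope ring_scope.

Definition form (n : nat) (G : 'M[rat]_n) (x y : 'cV[rat]_n) : rat :=
  (x^T *m G *m y) 0 0.

Definition inL (n : nat) (x : 'cV[rat]_n) : Prop :=
  forall i, x i 0 \is a Num.int.

Definition inDual (n : nat) (G : 'M[rat]_n) (a : 'cV[rat]_n) : Prop :=
  forall b, inL b -> form G a b \is a Num.int.

Definition pos_def_even_lattice (n : nat) (G : 'M[rat]_n) : Prop :=
  [/\ G^T = G,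
      (forall x : 'cV[rat]_n, x != 0 -> 0 < form G x x) &
      (forall x, inL x -> form G x x / 2 \is a Num.int)].

Definition fpf_isometry_of_order (n : nat) (G S : 'M[rat]_n) (p : nat) : Prop :=
  [/\ (forall i j, S i j \is a Num.int),
      S^T *m G *m S = G,
      S ^+ p = 1,
      (forall k, (0 < k < p)%N -> S ^+ k != 1) &
      (forall x, inL x -> S *m x = x -> x = 0)].

Definition s_of (p : nat) : nat := if odd p then (2 * p)%N else p.

Definition c_sigma_val (n : nat) (G S : 'M[rat]_n) (p : nat) (a b : 'cV[rat]_n) : rat :=
  ((s_of p)%:R / p%:R) * \sum_(1 <= i < p) form G (i%:R *: (S ^+ i *m a)) b.

Definition c_sigma_zero (n : nat) (G S : 'M[rat]_n) (p : nat) (a b : 'cV[rat]_n) : Prop :=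
  exists k : int, c_sigma_val G S p a b = (s_of p)%:R * k%:~R.

Definition in_R (n : nat) (G S : 'M[rat]_n) (p : nat) (a : 'cV[rat]_n) : Prop :=
  inL a /\ forall b, inL b -> c_sigma_zero G S p a b.

Definition in_img_dual (n : nat) (G S : 'M[rat]_n) (a : 'cV[rat]_n) : Prop :=
  inL a /\ exists g, inDual G g /\ a = (1 - S) *m g.

(* Main.v *)
Require Import Defs.
From HB Require Import structures.
From mathcomp Require Import all_boot all_order all_algebra ring.
Import Order.TTheory GRing.Theory Num.Theory.
Local Open Scope ring_scope.
Local Notation form := Defs.form.

Lemma zmod_helper (V : zmodType) (a b c d : V) :
  a - b + (b - c) = a + d - (c + d).
Proof. by rewrite addrA subrK opprD addrA addrAC addrK. Qed.

Lemma form_sum n (G : 'M[rat]_n) (I : Type) (r : seq I) (P : pred I)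
  (v : I -> 'cV[rat]_n) b :
  form G (\sum_(i <- r | P i) v i) b = \sum_(i <- r | P i) form G (v i) b.
Proof. by rewrite /form raddf_sum !mulmx_suml summxE. Qed.

Lemma form_scale n (G : 'M[rat]_n) (c : rat) x b :
  form G (c *: x) b = c * form G x b.
Proof. by rewrite /form linearZ /= -!scalemxAl mxE. Qed.

Section Aux.
Variables (n : nat) (S : 'M[rat]_n).

Lemma inL_mul (hS : forall i j, S i j \is a Num.int) x :
  inL x -> inL (S *m x).
Proof.
move=> hx i; rewrite mxE; apply: rpred_sum => j _; apply: rpredM => //.
Qed.

Lemma inL_exp (hS : forall i j, S i j \is a Num.int) k x :
  inL x -> inL (S ^+ k *m x).
Proof.
elim: k => [|k IH] hx; first by rewrite expr0 mul1mx.
by rewrite exprS -mulmxE -mulmxA; apply: inL_mul => //; apply: IH.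
Qed.

Lemma sum_pow_zero p (hp : (1 <= p)%N) (hS : forall i j, S i j \is a Num.int)
  (hSp : S ^+ p = 1) (hfp : forall x, inL x -> S *m x = x -> x = 0) :
  \sum_(i < p) S ^+ i = 0.
Proof.
set N := \sum_(i < p) S ^+ i.
have SN : S * N = N.
  case: p hp hSp @N => // p _ hSp N.
  rewrite /N mulr_sumr big_ord_recr big_ord_recl /= -exprS hSp expr0 addrC.
  by congr (_ + _); apply: eq_bigr => i _; rewrite -exprS.
apply/matrixP => i j; rewrite mxE.
have : col j N = 0.
  apply: hfp; last by rewrite colE mulmxA mulmxE SN.
  rewrite colE /N mulmx_suml => k; rewrite summxE; apply: rpred_sum => m _.
  apply: inL_exp => // r; rewrite mxE; case: (_ && _) => //.
move/matrixP => /(_ i 0); rewrite !mxE => ->.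
done.
Qed.

Lemma key_id (m : nat) :
  (1 - S) * (\sum_(i < m) i%:R *: S ^+ i) =
  \sum_(i < m) S ^+ i.+1 - m%:R *: S ^+ m.
Proof.
elim: m => [|m IH]; first by rewrite !big_ord0 mulr0 scale0r subr0.
rewrite !big_ord_recr /= mulrDr IH mulrBl mul1r -mulmxE -scalemxAr mulmxE -exprS.
rewrite -[(m.+1)%:R]natr1 scalerDl scale1r.
by apply: zmod_helper.
Qed.

End Aux.

Theorem mainTheorem1 (n p : nat) (G S : 'M[rat]_n)
  (hL : pos_def_even_lattice G) (hp : (2 <= p)%N)
  (hS : fpf_isometry_of_order G S p) :
  forall a : 'cV[rat]_n, in_R G S p a <-> in_img_dual G S a.
Proof.
case: hS => hSi hiso hSp _ hfp.
have p0 : (p%:R : rat) != 0 by rewrite pnatr_eq0 -lt0n; apply: leq_trans hp.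
have s0 : ((s_of p)%:R : rat) != 0.
  by rewrite pnatr_eq0 -lt0n /s_of; case: ifP => _; rewrite ?muln_gt0 /=; apply: leq_trans hp.
set T : 'M[rat]_n := \sum_(i < p) i%:R *: S ^+ i.
have hT : (1 - S) * T = - (p%:R *: (1 : 'M[rat]_n)).
  rewrite key_id; under eq_bigr do rewrite exprS.
  rewrite -mulr_sumr (@sum_pow_zero _ S p (ltnW hp)) // mulr0 hSp sub0r //.
have hT' : T * (1 - S) = - (p%:R *: (1 : 'M[rat]_n)).
  rewrite -hT mulrBl mulrBr mul1r mulr1; congr (_ - _).
  rewrite mulr_sumr mulr_suml; apply: eq_bigr => i _.
  by rewrite -!mulmxE -scalemxAl -scalemxAr !mulmxE -exprS -exprSr.
have hc : forall a b, c_sigma_val G S p a b =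
    (s_of p)%:R / p%:R * form G (T *m a) b.
  move=> a b; rewrite /c_sigma_val; congr (_ * _).
  rewrite mulmx_suml form_sum -(big_mkord xpredT (fun i => form G (i%:R *: S ^+ i *m a) b)).
  rewrite (big_ltn (ltnW hp)) scale0r mul0mx /form trmx0 !mul0mx mxE add0r.
  by apply: eq_bigr => i _; rewrite scalemxAl.
move=> a; split.
  case=> hLa hc0; split => //.
  exists (- (p%:R)^-1 *: (T *m a)); split.
    move=> b hb; case: (hc0 b hb) => k; rewrite hc => hk.
    have hF : form G (T *m a) b = p%:R * k%:~R.
      have -> : form G (T *m a) b =
        (s_of p)%:R / p%:R * form G (T *m a) b * p%:R / (s_of p)%:R.
        by field; apply/andP; split.
      by rewrite hk; field.
    by rewrite form_scale hF mulrA mulNr mulVf // mulN1r rpredN intr_int.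
  rewrite -scalemxAr mulmxA mulmxE hT mulNmx -scalemxAl mul1mx.
  by rewrite scalerN scaleNr opprK scalerA mulVf // scale1r.
case=> hLa [g [hg ha]]; split => // b hb.
rewrite /c_sigma_zero hc ha mulmxA mulmxE hT' mulNmx -scalemxAl mul1mx -scaleNr form_scale.
have := hg b hb; case/intrP => m ->.
exists (- m); rewrite rmorphN /=; field; done.
Qed.
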